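(* For any two local decompositions $\Gamma_1,\Gamma_2$ (on the same bipartite system), $\phi(\Gamma_1\cdot\Gamma_2)\le\phi(\Gamma_1)\phi(\Gamma_2)$.
   Context: A local decomposition is a finite set $\Gamma=\{(c_i,V_i\otimes W_i):i\in[m]\}$ with $c_i\in\mathbb{R}$, $V_i\in\mathsf{U}(\mathcal{H}_A)$, $W_i\in\mathsf{U}(\mathcal{H}_B)$. Its magnitude is $\phi(\Gamma)=2\|c\|_1^2-\|c\|_2^2$, viewing $c=(c_i)_{i\in[m]}\in\mathbb{R}^m$. The product of $\Gamma_1=\{(a_i,V^{(1)}_i\otimes W^{(1)}_i):i\in[m_1]\}$ and $\Gamma_2=\{(b_j,V^{(2)}_j\otimes W^{(2)}_j):j\in[m_2]\}$ is $\Gamma_1\cdot\Gamma_2=\{(a_ib_j,V^{(1)}_iV^{(2)}_j\otimes W^{(1)}_iW^{(2)}_j):(i,j)\in[m_1]\times[m_2]\}$, with coefficient vector $(a_ib_j)_{(i,j)}$. *)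

(* Defs.v *)
From HB Require Import structures.
From mathcomp Require Import all_boot all_order all_algebra.
From mathcomp Require Import complex.
Set Implicit Arguments. Unset Strict Implicit. Unset Printing Implicit Defensive.
Import Order.TTheory GRing.Theory Num.Theory.
Local Open Scope ring_scope.

(* Finite-dimensional Hilbert spaces H_A = C^dA, H_B = C^dB, with C = R[i]
   for a real closed field R (e.g. the reals). *)

Definition adjmx (R : rcfType) (n : nat) (U : 'M[R[i]]_n) : 'M[R[i]]_n :=
  (map_mx (fun z : R[i] => (z^*)%C) U)^T.

Definition unitary (R : rcfType) (n : nat) (U : 'M[R[i]]_n) : Prop :=
  U *m adjmx U = 1%:M /\ adjmx U *m U = 1%:M.

(* A local decomposition {(c_i, V_i ⊗ W_i) : i in I}, indexed by a finite
   type I; the tensor V_i ⊗ W_i is recorded by its two factors. *)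
Record local_decomp (R : rcfType) (dA dB : nat) := LocalDecomp {
  ld_idx : finType;
  ld_c : ld_idx -> R;
  ld_V : ld_idx -> 'M[R[i]]_dA;
  ld_W : ld_idx -> 'M[R[i]]_dB;
  ld_V_unitary : forall i, unitary (ld_V i);
  ld_W_unitary : forall i, unitary (ld_W i)
}.
Arguments ld_idx {R dA dB} _.
Arguments ld_c {R dA dB} _ _.
Arguments ld_V {R dA dB} _ _.
Arguments ld_W {R dA dB} _ _.
Arguments ld_V_unitary {R dA dB} _ _.
Arguments ld_W_unitary {R dA dB} _ _.

Definition magnitude (R : rcfType) (dA dB : nat) (G : local_decomp R dA dB) : R :=
  2 * (\sum_(i : ld_idx G) `|ld_c G i|) ^+ 2 - \sum_(i : ld_idx G) ld_c G i ^+ 2.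

Lemma unitary_mul (R : rcfType) (n : nat) (U V : 'M[R[i]]_n) :
  unitary U -> unitary V -> unitary (U *m V).
Proof.
have adjM : forall (X Y : 'M[R[i]]_n), adjmx (X *m Y) = adjmx Y *m adjmx X.
  by move=> X Y; rewrite /adjmx map_mxM trmx_mul.
move=> [U1 U2] [V1 V2]; rewrite /unitary adjM; split.
  by rewrite mulmxA -(mulmxA U) V1 mulmx1 U1.
by rewrite mulmxA -(mulmxA (adjmx V)) U2 mulmx1 V2.
Qed.

Definition ld_prod (R : rcfType) (dA dB : nat) (G1 G2 : local_decomp R dA dB)
  : local_decomp R dA dB :=
  @LocalDecomp R dA dB (ld_idx G1 * ld_idx G2)%type
    (fun p => ld_c G1 p.1 * ld_c G2 p.2)
    (fun p => ld_V G1 p.1 *m ld_V G2 p.2)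
    (fun p => ld_W G1 p.1 *m ld_W G2 p.2)
    (fun p => unitary_mul (ld_V_unitary G1 p.1) (ld_V_unitary G2 p.2))
    (fun p => unitary_mul (ld_W_unitary G1 p.1) (ld_W_unitary G2 p.2)).

(* Main.v *)
Require Import Defs.
From HB Require Import structures.
From mathcomp Require Import all_boot all_order all_algebra.
From mathcomp Require Import complex ring.
Import Order.TTheory GRing.Theory Num.Theory.
Local Open Scope ring_scope.

Lemma sq_le (R : rcfType) (I : finType) (c : I -> R) :
  \sum_i c i ^+ 2 <= (\sum_i `|c i|) ^+ 2.
Proof.
rewrite expr2 mulr_suml; apply: ler_sum => i _.
rewrite -real_normK ?num_real // expr2 ler_wpM2l //.
rewrite (bigD1 i) //= lerDl; apply: sumr_ge0 => j _; exact: normr_ge0.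
Qed.

Lemma alg (R : rcfType) (A1 A2 B1 B2 : R) :
  (2 * A1 ^+ 2 - A2) * (2 * B1 ^+ 2 - B2) - (2 * (A1 * B1) ^+ 2 - A2 * B2)
   = 2 * ((A1 ^+ 2 - A2) * (B1 ^+ 2 - B2)).
Proof. rewrite exprMn; ring. Qed.

Theorem lemma2 (R : rcfType) (dA dB : nat) (G1 G2 : local_decomp R dA dB) :
  magnitude (ld_prod G1 G2) <= magnitude G1 * magnitude G2.
Proof.
rewrite /magnitude /=.
set a := ld_c G1; set b := ld_c G2.
have E1 : \sum_(p : (ld_idx G1 * ld_idx G2)%type) `|a p.1 * b p.2|
    = (\sum_i `|a i|) * (\sum_j `|b j|).
  symmetry; rewrite mulr_suml; under eq_bigr do rewrite mulr_sumr.
  rewrite pair_big /=; apply: eq_bigr => -[i j] _ /=; by rewrite normrM.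
have E2 : \sum_(p : (ld_idx G1 * ld_idx G2)%type) (a p.1 * b p.2) ^+ 2
    = (\sum_i a i ^+ 2) * (\sum_j b j ^+ 2).
  symmetry; rewrite mulr_suml; under eq_bigr do rewrite mulr_sumr.
  rewrite pair_big /=; apply: eq_bigr => -[i j] _ /=; by rewrite exprMn.
rewrite E1 E2.
have Ha := (@sq_le _ _ a); have Hb := (@sq_le _ _ b).
move: Ha Hb.
set A1 := \sum_i `|a i|; set A2 := \sum_i a i ^+ 2.
set B1 := \sum_j `|b j|; set B2 := \sum_j b j ^+ 2.
move=> Ha Hb.
rewrite -subr_ge0.
rewrite alg.
by rewrite mulr_ge0 // mulr_ge0 // subr_ge0.
Qed.
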